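(* Fix $m\ge1$, $\theta\in(0,1]$ and a homogeneous voting rule $f$. Suppose there is $\epsilon>0$ such that $f$ is not CM in every continuous profile $P'$ of total weight $1$ with $\max_p|w(p,P')-w(p,\hat P)|<\epsilon$. Then for every $n\ge1$, $$\rho(f,m,n,\theta)\le 2\,m!\,e^{-2\epsilon^2 n}.$$
   Context: A ranking is a strict total order on $\{1,\dots,m\}$. A discrete profile $P$ consists of candidates, $n$ voters and a ranking $P_v$ per voter; $w(p,P)$ is the number of voters with ranking $p$. A continuous profile consists of candidates, total weight $w(P)>0$ and weights $w(p,P)\ge0$ summing to $w(P)$; the normalized profile $\bar P$ has weights $w(p,P)/w(P)$. A voting rule maps every profile (discrete or continuous) to one of its candidates; homogeneous means $f(P)=f(\bar P)$. CM (discrete): $f$ is CM in discrete $P$ if there is a discrete $Q$ with the same candidates and voters, $f(Q)\ne f(P)$, and every voter $v$ with $Q_v\ne P_v$ prefers $f(Q)$ to $f(P)$ according to $P_v$. CM (continuous): $f$ is CM in continuous $P$ if there is a continuous $Q$ with the same candidates and total weight, $f(Q)\ne f(P)$, and every ranking $p$ with $w(p,Q)<w(p,P)$ prefers $f(Q)$ to $f(P)$. Perturbed Culture ($m,n\ge1$, $\theta\in(0,1]$): random discrete profile with candidates $\{1,\dots,m\}$, voters $\{1,\dots,n\}$, each voter independently having ranking $1\succ\cdots\succ m$ with probability $\theta$ and a uniformly random ranking with probability $1-\theta$. $\hat P$: total weight $1$, weight $\theta+\frac{1-\theta}{m!}$ on $1\succ\cdots\succ m$ and $\frac{1-\theta}{m!}$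 on each other ranking. $\rho(f,m,n,\theta)$: probability that $f$ is CM in the random profile. *)

(* Defs.v *)
From HB Require Import structures.
From mathcomp Require Import all_boot all_order all_algebra all_fingroup.
From mathcomp Require Import reals.
From mathcomp Require Import sequences exp.
Set Implicit Arguments. Unset Strict Implicit. Unset Printing Implicit Defensive.
Import Order.TTheory GRing.Theory Num.Theory.
Local Open Scope ring_scope.

(* Candidates are 'I_m (candidate i+1 of the paper is the ordinal i).
   A ranking is a permutation p : {perm 'I_m}, where p k is the candidate
   placed in position k (position 0 = top).  *)
Definition ranking (m : nat) := {perm 'I_m}.

Definition prefers m (p : ranking m) (a b : 'I_m) : bool :=
  (nat_of_ord ((p^-1)%g a) < nat_of_ord ((p^-1)%g b))%N.

Definition id_ranking m : ranking m := 1%g.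

Definition dprofile m n := {ffun 'I_n -> ranking m}.

(* A continuous profile: a weight function (valid when nonnegative with
   positive total). *)
Definition cweights (R : realType) m := {ffun ranking m -> R}.

Definition total_weight (R : realType) m (w : cweights R m) : R := \sum_p w p.

Definition valid_cprofile (R : realType) m (w : cweights R m) : Prop :=
  (forall p, 0 <= w p) /\ 0 < total_weight w.

Definition dweight m n (P : dprofile m n) (p : ranking m) : nat :=
  #|[set v | P v == p]|.

Definition normalize (R : realType) m (w : cweights R m) : cweights R m :=
  [ffun p => w p / total_weight w].

Definition dnormalize (R : realType) m n (P : dprofile m n) : cweights R m :=
  [ffun p => (dweight P p)%:R / n%:R].

(* A voting rule on m candidates: it maps discrete profiles (any number of
   voters) and continuous profiles to a candidate.  (Its value on invalid
   weight functions is irrelevant.) *)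
Record voting_rule (R : realType) (m : nat) := VotingRule {
  vr_disc : forall n, dprofile m n -> 'I_m;
  vr_cont : cweights R m -> 'I_m }.

Definition homogeneous (R : realType) m (f : voting_rule R m) : Prop :=
  (forall n (P : dprofile m n), (0 < n)%N ->
      vr_disc f P = vr_cont f (dnormalize R P)) /\
  (forall w : cweights R m, valid_cprofile w ->
      vr_cont f w = vr_cont f (normalize w)).

Definition CM_disc (R : realType) m (f : voting_rule R m) n (P : dprofile m n)
  : bool :=
  [exists Q : dprofile m n,
     (vr_disc f Q != vr_disc f P) &&
     [forall v, (Q v != P v) ==> prefers (P v) (vr_disc f Q) (vr_disc f P)]].

Definition CM_cont (R : realType) m (f : voting_rule R m) (w : cweights R m)
  : Prop :=
  exists w' : cweights R m,
    [/\ valid_cprofile w', total_weight w' = total_weight w,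
        vr_cont f w' != vr_cont f w &
        forall p, w' p < w p -> prefers p (vr_cont f w') (vr_cont f w)].

Definition hatP (R : realType) m (theta : R) : cweights R m :=
  [ffun p => (if p == id_ranking m then theta else 0) + (1 - theta) / (m`!)%:R].

Definition pc_prob (R : realType) m (theta : R) (p : ranking m) : R :=
  theta * (p == id_ranking m)%:R + (1 - theta) * (1 / (m`!)%:R).

(* rho(f, m, n, theta): probability (under the product distribution of n
   independent voters) that f is CM in the random discrete profile. *)
Definition rho (R : realType) m (f : voting_rule R m) (n : nat) (theta : R) : R :=
  \sum_(P : dprofile m n | CM_disc f P) \prod_(v : 'I_n) pc_prob theta (P v).

(* Main.v *)
Require Import Defs.
From HB Require Import structures.
From mathcomp Require Import all_boot all_order all_algebra all_fingroup.
From mathcomp Require Import reals.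
From mathcomp Require Import sequences exp.
From mathcomp Require Import all_classical all_reals.
From mathcomp Require Import topology normedtype derive realfun.
From mathcomp Require Import ring lra.
Set Implicit Arguments. Unset Strict Implicit. Unset Printing Implicit Defensive.
Import Order.TTheory GRing.Theory Num.Theory numFieldNormedType.Exports.
Local Open Scope ring_scope.

Section HL.
Variables (R : realType) (q : R).
Hypothesis q0 : 0 <= q.
Hypothesis q1 : q <= 1.

Let D (x : R) := 1 - q + q * expR x.

Let D_gt0 x : 0 < D x.
Proof.
rewrite /D; have [->|qn0] := eqVneq q 0; first by rewrite mul0r subr0 addr0.
have : 0 < q * expR x by rewrite mulr_gt0 ?expR_gt0 // lt0r qn0.
have : 0 <= 1 - q by rewrite subr_ge0.
move=> a b; exact: ltr_wpDl a b.
Qed.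

Let D_der (x : R) : is_derive x 1 D (q * expR x).
Proof. by rewrite /D; apply: is_derive_eq; rewrite add0r mul1r. Qed.

Let gd (x : R) := q + x / 4 - q * expR x * (D x)^-1.

Let gd_der (x : R) : is_derive x 1 gd (1/4 - q * (1 - q) * expR x / (D x)^+2).
Proof.
have hV := is_deriveV (lt0r_neq0 (D_gt0 x)) (D_der x).
rewrite /gd; apply: is_derive_eq.
have Dn0 := lt0r_neq0 (D_gt0 x).
rewrite /D in Dn0 *.
by rewrite /GRing.scale /=; field.
Qed.

Let gd_der_ge0 (x : R) : 0 <= 1/4 - q * (1 - q) * expR x / (D x)^+2.
Proof.
have Dp := D_gt0 x.
rewrite subr_ge0 ler_pdivrMr ?exprn_gt0 // /D.
have e0 := expR_gt0 x.
set e := expR x in e0 *.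
have := sqr_ge0 (1 - q - q * e). nra.
Qed.

Let gd_ge0 (x : R) : 0 <= x -> 0 <= gd x.
Proof.
move=> x0.
have -> : 0 = gd 0 by rewrite /gd /D expR0 mulr1 subrK mul0r addr0 invr1 mulr1 subrr.
apply: (@ger0_derive1_ndecr _ gd 0 x) => //.
- move=> y _; by case: (gd_der y).
- by move=> y _; rewrite derive1E; case: (gd_der y) => _ ->.
- apply: derivable_within_continuous => y _; by case: (gd_der y).
Qed.

Let k (x : R) := D x * expR (- (x * q + x ^+ 2 / 8)).

Let k_der (x : R) : is_derive x 1 k (- (expR (- (x * q + x ^+ 2 / 8)) * D x * gd x)).
Proof.
have h1 : is_derive x 1 (fun y : R => - (y * q + y ^+ 2 / 8)) (- (q + x / 4)).
  apply: is_derive_eq; rewrite /GRing.scale /=. by field.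
have h2 := @is_derive1_comp _ expR (fun y : R => - (y * q + y ^+ 2 / 8)) x _ _ (is_derive_expR _) h1.
rewrite /k; apply: is_derive_eq.
rewrite /GRing.scale /= /gd.
have Dn0 := lt0r_neq0 (D_gt0 x).
rewrite /D in Dn0 *.
by field.
Qed.

Lemma hoeffding_lemma (s : R) : 0 <= s -> 1 - q + q * expR s <= expR (s * q + s ^+ 2 / 8).
Proof.
move=> s0.
have : k s <= k 0.
  apply: (@ler0_derive1_nincr _ k 0 s) => //.
  - move=> y; rewrite in_itv /= => /andP[y0 _].
    rewrite derive1E; case: (k_der y) => _ ->; rewrite oppr_le0.
    by rewrite mulr_ge0 ?mulr_ge0 ?expR_ge0 ?gd_ge0 ?ltW ?D_gt0.
  - apply: derivable_within_continuous => y _; by case: (k_der y).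
rewrite /k /D expR0 mulr1 subrK mul0r expr0n /= mul0r addr0 oppr0 expR0 mulr1.
rewrite expRN -/(D s) ler_pdivrMr ?expR_gt0 // mul1r. by [].
Qed.
End HL.

Section Comb.
Variables (R : realType) (m : nat) (theta : R).
Hypothesis th0 : 0 <= theta.
Hypothesis th1 : theta <= 1.

Lemma card_ranking : #|ranking m| = m`!.
Proof. rewrite -card_Sn; apply: eq_card => x; by rewrite !inE. Qed.

Lemma pc_ge0 (r : ranking m) : 0 <= pc_prob theta r.
Proof.
rewrite /pc_prob; apply: addr_ge0; apply: mulr_ge0 => //;
  by rewrite ?subr_ge0 ?divr_ge0.
Qed.

Lemma pc_sum : \sum_(r : ranking m) pc_prob theta r = 1.
Proof.
rewrite big_split /=.
have -> : \sum_(r : ranking m) theta * (r == id_ranking m)%:R = theta.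
  rewrite (bigD1 (id_ranking m)) //= eqxx mulr1 big1 ?addr0 //.
  by move=> r /negbTE ->; rewrite mulr0.
rewrite sumr_const card_ranking.
have mf : (m`!)%:R != 0 :> R by rewrite pnatr_eq0 -lt0n fact_gt0.
rewrite -mulr_natr; field. exact: mf.
Qed.

Lemma hatP_pc p : hatP m theta p = pc_prob theta p.
Proof.
rewrite /hatP /pc_prob ffunE mul1r.
by case: (p == id_ranking m); rewrite ?mulr1 ?mulr0.
Qed.

Variable n : nat.

Definition pr (P : dprofile m n) := \prod_(v : 'I_n) pc_prob theta (P v).

Lemma pr_ge0 P : 0 <= pr P.
Proof. by apply: prodr_ge0 => v _; exact: pc_ge0. Qed.

Lemma expect_prod (g : ranking m -> R) :
  \sum_(P : dprofile m n) \prod_(v : 'I_n) (pc_prob theta (P v) * g (P v))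
  = (\sum_(r : ranking m) pc_prob theta r * g r) ^+ n.
Proof.
rewrite -(bigA_distr_bigA (fun (v : 'I_n) r => pc_prob theta r * g r)) /=.
by rewrite prodr_const card_ord.
Qed.

Lemma dweight_sum (P : dprofile m n) p :
  ((dweight P p)%:R : R) = \sum_(v : 'I_n) ((P v == p)%:R : R).
Proof.
rewrite /dweight -sum1_card natr_sum big_mkcond /=.
by apply: eq_bigr => v _; rewrite inE; case: (P v == p).
Qed.

Lemma dweight_total (P : dprofile m n) :
  \sum_(p : ranking m) ((dweight P p)%:R : R) = n%:R.
Proof.
under eq_bigr do rewrite dweight_sum.
rewrite exchange_big /=.
rewrite (eq_bigr (fun _ => 1)) ?sumr_const ?card_ord //.
move=> v _; rewrite (bigD1 (P v)) //= eqxx big1 ?addr0 //.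
by move=> p; rewrite eq_sym => /negbTE ->.
Qed.

Variables (eps : R).
Hypothesis eps0 : 0 < eps.

Section Tail.
Variable (b : ranking m -> bool).

Definition qb := \sum_(r : ranking m) (b r)%:R * pc_prob theta r.
Definition Sb (P : dprofile m n) := \sum_(v : 'I_n) ((b (P v))%:R : R).

Lemma qb_ge0 : 0 <= qb.
Proof. by apply: sumr_ge0 => r _; rewrite mulr_ge0 ?pc_ge0. Qed.

Lemma qb_le1 : qb <= 1.
Proof.
rewrite -pc_sum; apply: ler_sum => r _.
by case: (b r); rewrite ?mul1r ?mul0r ?pc_ge0.
Qed.

Lemma tail :
  \sum_(P : dprofile m n) ((n%:R * (qb + eps) <= Sb P)%R%:R * pr P)
  <= expR (- (2 * eps ^+ 2 * n%:R)).
Proof.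
set c := n%:R * (qb + eps).
set t := 4 * eps.
have t0 : 0 <= t by rewrite /t mulr_ge0 // ltW.
apply: (@le_trans _ _ (\sum_(P : dprofile m n) pr P * expR (t * (Sb P - c)))).
  apply: ler_sum => P _.
  have [h|h] := boolP (c <= Sb P).
    rewrite mul1r; apply: ler_peMr; first exact: pr_ge0.
    by rewrite -expR0 ler_expR mulr_ge0 // subr_ge0.
  by rewrite mul0r mulr_ge0 ?pr_ge0 ?expR_ge0.
have -> : \sum_(P : dprofile m n) pr P * expR (t * (Sb P - c)) =
   expR (- (t * c)) * (\sum_(r : ranking m) pc_prob theta r * expR (t * (b r)%:R)) ^+ n.
  rewrite -expect_prod mulr_sumr; apply: eq_bigr => P _.
  rewrite big_split /= -/(pr P) mulrBr expRD /Sb mulr_sumr expR_sum.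
  by ring.
have -> : \sum_(r : ranking m) pc_prob theta r * expR (t * (b r)%:R) = 1 - qb + qb * expR t.
  rewrite (eq_bigr (fun r => pc_prob theta r + (b r)%:R * pc_prob theta r * (expR t - 1))).
    by rewrite big_split /= pc_sum -mulr_suml -/qb; ring.
  move=> r _; case: (b r) => /=; rewrite ?mulr1 ?mulr0 ?expR0 ?mul1r ?mul0r; ring.
apply: (@le_trans _ _ (expR (- (t * c)) * expR (t * qb + t ^+ 2 / 8) ^+ n)).
  rewrite ler_wpM2l ?expR_ge0 //; apply: lerXn2r; rewrite ?nnegrE ?expR_ge0 //.
    by rewrite addr_ge0 ?subr_ge0 ?qb_le1 // mulr_ge0 ?qb_ge0 ?expR_ge0.
  by apply: hoeffding_lemma => //; [exact: qb_ge0 | exact: qb_le1].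
rewrite -expRM_natl -expRD.
have -> : - (t * c) + n%:R * (t * qb + t ^+ 2 / 8) = - (2 * eps ^+ 2 * n%:R) by rewrite /c /t; field.
by [].
Qed.
End Tail.

Lemma qb_eq (p : ranking m) : qb (fun r => r == p) = pc_prob theta p.
Proof.
rewrite /qb (bigD1 p) //= eqxx mul1r big1 ?addr0 //.
by move=> r /negbTE ->; rewrite mul0r.
Qed.

Lemma qb_neq (p : ranking m) : qb (fun r => r != p) = 1 - pc_prob theta p.
Proof.
rewrite -pc_sum -qb_eq /qb -sumrB; apply: eq_bigr => r _.
by case: (r == p); rewrite /= ?mul1r ?mul0r ?subr0 ?subrr.
Qed.

Lemma Sb_eq (P : dprofile m n) p : Sb (fun r => r == p) P = (dweight P p)%:R.
Proof. by rewrite dweight_sum. Qed.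

Lemma Sb_neq (P : dprofile m n) p :
  Sb (fun r => r != p) P = n%:R - (dweight P p)%:R.
Proof.
have -> : (n%:R : R) = \sum_(v : 'I_n) 1 by rewrite sumr_const card_ord.
rewrite dweight_sum /Sb -sumrB.
apply: eq_bigr => v _.
by case: (P v == p); rewrite /= ?subr0 ?subrr.
Qed.

Lemma dnorm_total (P : dprofile m n) : (0 < n)%N ->
  total_weight (dnormalize R P) = 1.
Proof.
move=> n0; rewrite /total_weight.
under eq_bigr do rewrite ffunE.
by rewrite -mulr_suml dweight_total mulfV // pnatr_eq0 -lt0n.
Qed.

Lemma CM_bad (f : voting_rule R m) : homogeneous f -> (0 < n)%N ->
  (forall P' : cweights R m,
      (forall p, 0 <= P' p) -> total_weight P' = 1 ->
      (forall p, `|P' p - hatP m theta p| < eps) ->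
      ~ CM_cont f P') ->
  forall P : dprofile m n, CM_disc f P ->
  exists p, eps <= `|(dweight P p)%:R / n%:R - pc_prob theta p|.
Proof.
move=> hom n0 H P cmP.
case: (boolP [exists p, eps <= `|(dweight P p)%:R / n%:R - pc_prob theta p|]).
  by move=> /existsP [p hp]; exists p.
rewrite negb_exists => /forallP hall; exfalso.
have nn : 0 <= (n%:R : R)^-1 by rewrite invr_ge0.
apply: (H (dnormalize R P)).
- by move=> p; rewrite ffunE mulr_ge0.
- exact: dnorm_total.
- by move=> p; rewrite ffunE hatP_pc ltNge; exact: hall p.
case/existsP: cmP => Q /andP [neq /forallP hv].
have hQ := proj1 hom n Q n0; have hP := proj1 hom n P n0.
exists (dnormalize R Q); split.
- split; first by move=> p; rewrite ffunE mulr_ge0.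
  by rewrite dnorm_total.
- by rewrite !dnorm_total.
- by rewrite -hQ -hP.
move=> p; rewrite !ffunE ltr_pM2r ?invr_gt0 ?ltr0n // ltr_nat => hlt.
rewrite -hQ -hP.
case: (boolP [exists v, (P v == p) && (Q v != p)]).
  move=> /existsP [v /andP [/eqP Pv Qv]].
  by have := hv v; rewrite Pv Qv.
rewrite negb_exists => /forallP hall2; exfalso.
move: hlt; rewrite ltnNge; apply/negP; rewrite negbK.
rewrite /dweight; apply: subset_leq_card; apply/fintype.subsetP => v; rewrite !inE => Pv.
by have := hall2 v; rewrite Pv /= negbK.
Qed.

End Comb.

Theorem mainTheorem13 (R : realType) (m : nat) (theta : R)
  (f : voting_rule R m) (eps : R) :
  (1 <= m)%N -> 0 < theta <= 1 -> homogeneous f -> 0 < eps ->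
  (forall P' : cweights R m,
      (forall p, 0 <= P' p) -> total_weight P' = 1 ->
      (forall p, `|P' p - hatP m theta p| < eps) ->
      ~ CM_cont f P') ->
  forall n : nat, (1 <= n)%N ->
    rho f n theta <= 2 * (m`!)%:R * expR (- (2 * eps ^+ 2 * n%:R)).
Proof.
move=> m1 /andP [th0 th1] hom eps0 H n n1.
have th0' := ltW th0.
set U := fun (p : ranking m) (P : dprofile m n) =>
  ((n%:R * (qb theta (fun r => r == p) + eps) <= Sb R (fun r => r == p) P)%R%:R : R).
set L := fun (p : ranking m) (P : dprofile m n) =>
  ((n%:R * (qb theta (fun r => r != p) + eps) <= Sb R (fun r => r != p) P)%R%:R : R).
apply: (@le_trans _ _ (\sum_(P : dprofile m n) \sum_(p : ranking m)
          (U p P + L p P) * pr theta P)).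
  rewrite /rho big_mkcond /=; apply: ler_sum => P _.
  case: ifP => cm; last first.
    by apply: sumr_ge0 => p _; rewrite mulr_ge0 ?addr_ge0 ?(pr_ge0 th0' th1).
  have [p0 hp0] := CM_bad hom n1 H cm.
  rewrite (bigD1 p0) //=.
  apply: (@le_trans _ _ ((U p0 P + L p0 P) * pr theta P)).
    apply: ler_peMl; first exact: (pr_ge0 th0' th1).
    have np : (0 : R) < n%:R by rewrite ltr0n.
    have e : ((dweight P p0)%:R : R) = n%:R * ((dweight P p0)%:R / n%:R).
      by field; rewrite lt0r_neq0.
    move: hp0; rewrite ler_normr => /orP [h|h].
      have -> : U p0 P = 1.
        rewrite /U qb_eq Sb_eq.
        suff -> : (n%:R * (pc_prob theta p0 + eps) <= (dweight P p0)%:R) by [].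
        rewrite [X in _ <= X]e ler_pM2l //; lra.
      by rewrite lerDl /L ler0n.
    have -> : L p0 P = 1.
      rewrite /L qb_neq Sb_neq.
      suff -> : (n%:R * (1 - pc_prob theta p0 + eps) <= n%:R - (dweight P p0)%:R) by [].
      suff : n%:R * (1 - pc_prob theta p0 + eps) <= n%:R * (1 - (dweight P p0)%:R / n%:R).
        by rewrite mulrBr mulr1 -e.
      rewrite ler_pM2l //; lra.
    by rewrite lerDr /U ler0n.
  by rewrite lerDl sumr_ge0 // => p _; rewrite mulr_ge0 ?addr_ge0 ?(pr_ge0 th0' th1).
rewrite exchange_big /=.
apply: (@le_trans _ _ (\sum_(p : ranking m) 2 * expR (- (2 * eps ^+ 2 * n%:R)))).
  apply: ler_sum => p _.
  under eq_bigr do rewrite mulrDl.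
  rewrite big_split /= mulr2n mulrDl mul1r.
  apply: lerD.
    exact: (tail th0' th1 n eps0 (fun r => r == p)).
  exact: (tail th0' th1 n eps0 (fun r => r != p)).
rewrite sumr_const card_ranking -mulr_natr.
by rewrite le_eqVlt; apply/orP; left; apply/eqP; ring.
Qed.
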